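(* If $\xi\in L_G^{*1}(\Omega)$, then $|\xi|\in L_G^{*1}(\Omega)$.
   Context: $\Omega=C_0^d(\mathbb{R}^+)$ is the space of continuous paths $\omega:[0,\infty)\to\mathbb{R}^d$ with $\omega_0=0$, $B$ the canonical process, $\hat{\mathbb{E}}$ the $G$-expectation ($G$ a monotone sublinear function on $d\times d$ symmetric matrices), $L^1_G(\Omega)$ the completion of bounded Lipschitz cylinder functions $\varphi(B_{t_1},\dots,B_{t_n})$ under $\hat{\mathbb{E}}[|\cdot|]$. $\mathcal{P}$ is a weakly compact set of probability measures representing $\hat{\mathbb{E}}$, $\hat{\mathbb{E}}[X]=\sup_{P\in\mathcal{P}}E_P[X]$ for Borel $X$, $c(A)=\sup_{P\in\mathcal{P}}P(A)$, q.s. = outside a capacity-zero set. $\mathbb{L}^1(\Omega)$ = Borel $[-\infty,\infty]$-valued $X$ with $\hat{\mathbb{E}}[|X|]<\infty$; $L_G^{1^*}(\Omega)=\{X\in\mathbb{L}^1(\Omega):\exists X_n\in L^1_G(\Omega),X_n\downarrow X\text{ q.s.}\}$; $L_G^{*1}(\Omega)=\{X-Y:X,Y\in L_G^{1^*}(\Omega)\}$. *)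

(* Defs.v *)
From HB Require Import structures.
From mathcomp Require Import all_boot all_order all_algebra.
From mathcomp Require Import all_classical all_reals all_analysis measurable_realfun.
Set Implicit Arguments. Unset Strict Implicit. Unset Printing Implicit Defensive.
Import Order.TTheory GRing.Theory Num.Theory.
Import numFieldNormedType.Exports.
Local Open Scope classical_set_scope.
Local Open Scope ring_scope.

Section GSetting.
Variables (R : realType) (d : nat).

(* Omega = C_0^d(R^+): continuous paths w : [0,oo) -> R^d with w 0 = 0.
   Represented as continuous functions R -> R^d that vanish on (-oo, 0]
   (canonical extension; this is a bijection with C_0^d(R^+)). *)
Record path := Path {
  pfun :> R -> 'rV[R]_d ;
  pfun_cont : continuous pfun ;
  pfun_nonpos : forall t, t <= 0 -> pfun t = 0 }.

Lemma path0_cont : continuous (fun _ : R => (0 : 'rV[R]_d)).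
Proof. by move=> x; exact: cvg_cst. Qed.

Definition path0 : path := @Path (fun _ => 0) path0_cont (fun _ _ => erefl).

HB.instance Definition _ := gen_eqMixin path.
HB.instance Definition _ := gen_choiceMixin path.
HB.instance Definition _ := isPointed.Build path path0.

Definition B (t : R) (w : path) : 'rV[R]_d := pfun w t.

(* the topology of uniform convergence on compacts, given by its
   convergent sequences (Omega is metrizable) *)
Definition loc_unif_cvg (u : nat -> path) (w : path) : Prop :=
  forall T eps : R, 0 < T -> 0 < eps ->
    exists N : nat, forall n, (N <= n)%N ->
      forall t, 0 <= t <= T -> `|pfun (u n) t - pfun w t| < eps.

Definition path_closed (A : set path) : Prop :=
  forall u w, (forall n, A (u n)) -> loc_unif_cvg u w -> A w.

Definition path_open : set (set path) := [set A | path_closed (~` A)].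

Definition Omega : Type := path.
HB.instance Definition _ := Measurable.copy Omega (g_sigma_algebraType path_open).

Definition path_continuous (f : path -> R) : Prop :=
  forall u w, loc_unif_cvg u w -> f \o u @ \oo --> f w.

Definition bounded_continuous (f : path -> R) : Prop :=
  path_continuous f /\ exists M : R, forall w, `|f w| <= M.

(* weak compactness of a set of probability measures on Omega
   (sequential, equivalent by Prokhorov / metrizability) *)
Definition weakly_compact (Ps : set (probability Omega R)) : Prop :=
  forall P : nat -> probability Omega R, (forall n, Ps (P n)) ->
  exists (phi : nat -> nat) (Q : probability Omega R),
    [/\ Ps Q, {homo phi : m n / (m < n)%N >-> (m < n)%N} &
        forall f : Omega -> R, bounded_continuous f ->
          (fun n => \int[P (phi n)]_w (f w)%:E) @ \oo
             --> \int[Q]_w (f w)%:E]%E.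

Variable Ps : set (probability Omega R).

Definition Ehat (X : Omega -> \bar R) : \bar R :=
  ereal_sup [set integral P setT X | P in Ps]%E.

Definition cap (A : set Omega) : \bar R :=
  ereal_sup [set P A | P in Ps]%E.

Definition qs (Q : Omega -> Prop) : Prop :=
  exists N : set Omega, [/\ measurable N, cap N = 0%E & forall w, ~ N w -> Q w].

Definition lip_cyl (X : Omega -> R) : Prop :=
  exists (n : nat) (t : 'I_n -> R) (phi : 'M[R]_(n, d) -> R),
    [/\ forall i, 0 <= t i,
        exists M : R, forall x, `|phi x| <= M,
        exists L : R, forall x y, `|phi x - phi y| <= L * `|x - y| &
        forall w, X w = phi (\matrix_(i < n) B (t i) w)].

(* L^1_G: completion of the bounded Lipschitz cylinder functions under
   Ehat[|.|], realized as Borel functions approximable by them *)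
Definition L1G (X : Omega -> R) : Prop :=
  measurable_fun setT X /\
  exists phi : nat -> Omega -> R, (forall n, lip_cyl (phi n)) /\
    (fun n => Ehat (fun w => `|X w - phi n w|%:E)) @ \oo --> 0%E.

Definition bbL1 (X : Omega -> \bar R) : Prop :=
  measurable_fun setT X /\ (Ehat (fun w => `|X w|%E) < +oo)%E.

Definition L1Gstar (X : Omega -> \bar R) : Prop :=
  bbL1 X /\ exists Xn : nat -> Omega -> R, (forall n, L1G (Xn n)) /\
    qs (fun w => (forall n, Xn n.+1 w <= Xn n w) /\
                 (fun n => (Xn n w)%:E) @ \oo --> X w).

Definition LGstar1 (xi : Omega -> \bar R) : Prop :=
  exists X Y, [/\ L1Gstar X, L1Gstar Y & xi = (fun w => X w - Y w)%E].

End GSetting.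

(* Main.v *)
Require Import Defs.
From HB Require Import structures.
From mathcomp Require Import all_boot all_order all_algebra.
From mathcomp Require Import all_classical all_reals all_analysis measurable_realfun.
From mathcomp Require Import lra.
Set Implicit Arguments. Unset Strict Implicit. Unset Printing Implicit Defensive.
Import Order.TTheory GRing.Theory Num.Theory.
Import numFieldNormedType.Exports.
Local Open Scope classical_set_scope.
Local Open Scope ring_scope.

Section S.
Variables (R : realType) (d : nat) (Ps : set (probability (Omega R d) R)).
Hypothesis Ps_ne : Ps !=set0.

Lemma pcont_meas (f : Omega R d -> R) :
  (forall u w, loc_unif_cvg u w -> f \o u @ \oo --> f w) -> measurable_fun setT f.
Proof.
move=> fc; apply: (measurability _ (RGenOpens.measurableE R)).
move=> _ [_ [a [b ->] <-]]; rewrite setTI; apply: sub_sigma_algebra.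
move=> u w Hu Hcvg Hw.
have oab : open `]a, b[%classic by apply: interval_open.
have := fc u w Hcvg; move/(_ _ (oab _ Hw)) => [N _ HN].
exact: (Hu N (HN N (leqnn N))).
Qed.
Lemma mxn_ge m n (x : 'M[R]_(m,n)) i j : `|x i j| <= `|x|.
Proof. by rewrite [leRHS]/Num.norm /= mx_normrE; apply/bigmax_geP; right; exists (i,j). Qed.

Lemma mxn_le m n (x : 'M[R]_(m,n)) c : 0 <= c -> (forall i j, `|x i j| <= c) -> `|x| <= c.
Proof.
move=> c0 H; rewrite [leLHS]/Num.norm /= mx_normrE; apply/bigmax_leP; split=> // -[i j] _.
Qed.

Lemma lip_pcont (f : Omega R d -> R) : lip_cyl f ->
  forall u w, loc_unif_cvg u w -> f \o u @ \oo --> f w.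
Proof.
move=> [n [t [phi [t0 _ [L HL] fE]]]] u w Hc.
apply/cvgrPdist_lt => e e0.
pose T := 1 + \sum_i t i.
have s0 : 0 <= \sum_i t i by apply: sumr_ge0 => i _; exact: t0.
have T0 : 0 < T by rewrite /T; lra.
have tT i : 0 <= t i <= T.
  rewrite t0 /= /T (bigD1 i) //=.
  have : 0 <= \sum_(j | j != i) t j by apply: sumr_ge0 => j _; exact: t0.
  lra.
pose eps := e / (`|L| + 1).
have L0 : 0 <= `|L| by [].
have eps0 : 0 < eps by rewrite divr_gt0 //; lra.
have E1 : (`|L| + 1) * eps = e by rewrite /eps mulrC divfK //; apply/eqP => /eqP; lra.
have [N HN] := Hc T eps T0 eps0.
near=> k.
have Hk : (N <= k)%N by near: k; exists N.
rewrite /= !fE.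
apply: (le_lt_trans (HL _ _)).
have Mle : `|(\matrix_(i < n) B (t i) w) - \matrix_(i < n) B (t i) (u k)| <= eps.
  apply: mxn_le; first exact: ltW.
  move=> i j; rewrite !mxE.
  have := mxn_ge (B (t i) w - B (t i) (u k)) 0 j; rewrite !mxE => /le_trans; apply.
  rewrite distrC; apply: ltW; exact: HN.
have : L * `|(\matrix_(i < n) B (t i) w) - \matrix_(i < n) B (t i) (u k)| <= `|L| * eps.
  apply: le_trans (ler_wpM2l L0 Mle); apply: ler_wpM2r => //; exact: ler_norm.
nra.
Unshelve. all: by end_near.
Qed.
Lemma lip_op (g : R -> R -> R)
  (Hg1 : forall a b c e, `|g a b - g c e| <= `|a - c| + `|b - e|)
  (Hg2 : forall a b, `|g a b| <= `|a| + `|b|)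
  (f1 f2 : Omega R d -> R) : lip_cyl f1 -> lip_cyl f2 -> lip_cyl (fun w => g (f1 w) (f2 w)).
Proof.
move=> [n1 [t1 [p1 [t10 [M1 HM1] [L1 HL1] f1E]]]] [n2 [t2 [p2 [t20 [M2 HM2] [L2 HL2] f2E]]]].
exists (n1 + n2)%N, (fun i => match fintype.split i with inl a => t1 a | inr b => t2 b end),
  (fun x => g (p1 (usubmx x)) (p2 (dsubmx x))).
split.
- by move=> i; case: fintype.split.
- exists (M1 + M2) => x; apply: le_trans (Hg2 _ _) _; exact: lerD.
- exists (`|L1| + `|L2|) => x y; apply: le_trans (Hg1 _ _ _ _) _.
  have hu : `|usubmx x - usubmx y| <= `|x - y|.
    apply: mxn_le => // i j; have := mxn_ge (x - y) (lshift n2 i) j; by rewrite !mxE.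
  have hd : `|dsubmx x - dsubmx y| <= `|x - y|.
    apply: mxn_le => // i j; have := mxn_ge (x - y) (rshift n1 i) j; by rewrite !mxE.
  rewrite mulrDl; apply: lerD.
  + apply: le_trans (HL1 _ _) _; apply: le_trans (ler_wpM2l (normr_ge0 L1) hu).
    by apply: ler_wpM2r => //; exact: ler_norm.
  + apply: le_trans (HL2 _ _) _; apply: le_trans (ler_wpM2l (normr_ge0 L2) hd).
    by apply: ler_wpM2r => //; exact: ler_norm.
- move=> w; rewrite f1E f2E; congr (g (p1 _) (p2 _)); apply/matrixP => i j; rewrite !mxE.
  + by rewrite (unsplitK (inl _ i)).
  + by rewrite (unsplitK (inr _ i)).
Qed.
Section E.
Local Open Scope ereal_scope.
Lemma Ehat_ub (P : probability (Omega R d) R) f : Ps P ->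
  \int[P]_w f w <= Ehat Ps f.
Proof. by move=> PP; apply: ereal_sup_ubound; exists P. Qed.

Lemma Ehat_ge0 f : (forall w, 0 <= f w) -> 0 <= Ehat Ps f.
Proof.
move=> f0; case: Ps_ne => P PP; apply: le_trans (Ehat_ub f PP).
exact: integral_ge0.
Qed.

Lemma Ehat_le f g : (forall w, 0 <= f w) -> measurable_fun setT f ->
  measurable_fun setT g -> (forall w, f w <= g w) -> Ehat Ps f <= Ehat Ps g.
Proof.
move=> f0 mf mg fg; apply: ge_ereal_sup => _ [P PP <-].
apply: le_trans (Ehat_ub g PP); apply: ge0_le_integral => //.
Qed.

Lemma Ehat_add f g : (forall w, 0 <= f w) -> (forall w, 0 <= g w) ->
  measurable_fun setT f -> measurable_fun setT g ->
  Ehat Ps (fun w => f w + g w) <= Ehat Ps f + Ehat Ps g.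
Proof.
move=> f0 g0 mf mg; apply: ge_ereal_sup => _ [P PP <-].
rewrite ge0_integralD //; apply: leeD; exact: Ehat_ub.
Qed.
End E.

Lemma L1G_op (g : R -> R -> R)
  (Hg1 : forall a b c e, `|g a b - g c e| <= `|a - c| + `|b - e|)
  (Hg2 : forall a b, `|g a b| <= `|a| + `|b|)
  (Hgm : forall f1 f2 : Omega R d -> R, measurable_fun setT f1 -> measurable_fun setT f2 ->
     measurable_fun setT (fun w => g (f1 w) (f2 w)))
  (X Y : Omega R d -> R) : L1G Ps X -> L1G Ps Y -> L1G Ps (fun w => g (X w) (Y w)).
Proof.
move=> [mX [p [pl pc]]] [mY [q [ql qc]]].
split; first exact: Hgm.
exists (fun n w => g (p n w) (q n w)); split; first by move=> n; exact: lip_op.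
have mp n : measurable_fun setT (p n) := pcont_meas (lip_pcont (pl n)).
have mq n : measurable_fun setT (q n) := pcont_meas (lip_pcont (ql n)).
have mabs (f1 f2 : Omega R d -> R) : measurable_fun setT f1 -> measurable_fun setT f2 ->
    measurable_fun setT (fun w => (`|f1 w - f2 w|)%:E).
  move=> m1 m2; apply/measurable_EFinP; apply: measurableT_comp; first exact: normr_measurable.
  exact: measurable_funB.
have h0 : (fun n => (Ehat Ps (fun w => (`|X w - p n w|)%:E) + Ehat Ps (fun w => (`|Y w - q n w|)%:E))%E) @ \oo --> 0%E.
  by rewrite -(adde0 0%E); apply: cvgeD.
apply: (squeeze_cvge (f := cst 0%E)) h0; last exact: cvg_cst.
apply: nearW => n; apply/andP; split.
  by apply: Ehat_ge0 => w.
apply: (le_trans _ (Ehat_add _ _ (mabs _ _ mX (mp n)) (mabs _ _ mY (mq n)))); last first.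
- by [].
- by [].
apply: Ehat_le => //.
- apply: mabs => //; exact: Hgm.
- by apply: emeasurable_funD; apply: mabs.
- by move=> w; rewrite -EFinD lee_fin.
Qed.

Lemma cvg_op (g : R -> R -> R)
  (Hg1 : forall a b c e, `|g a b - g c e| <= `|a - c| + `|b - e|)
  (a b : nat -> R) x y : a @ \oo --> x -> b @ \oo --> y ->
  (fun n => g (a n) (b n)) @ \oo --> g x y.
Proof.
move=> /cvgrPdist_lt ha /cvgrPdist_lt hb; apply/cvgrPdist_lt => e e0.
have e2 : 0 < e / 2 by rewrite divr_gt0.
near=> n.
apply: le_lt_trans (Hg1 _ _ _ _) _.
have h1 : `|x - a n| < e / 2 by near: n; exact: ha.
have h2 : `|y - b n| < e / 2 by near: n; exact: hb.
lra.
Unshelve. all: by end_near.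
Qed.

Lemma capP A P : Ps P -> (P A <= cap Ps A)%E.
Proof. by move=> PP; apply: ereal_sup_ubound; exists P. Qed.

Lemma cap0 A : (forall P, Ps P -> P A = 0%E) -> cap Ps A = 0%E.
Proof.
move=> H; apply/eqP; rewrite eq_le; apply/andP; split.
  by apply: ge_ereal_sup => _ [P PP <-]; rewrite H.
by case: Ps_ne => P PP; rewrite -(H P PP); exact: capP.
Qed.

Lemma capP0 A P : Ps P -> cap Ps A = 0%E -> P A = 0%E.
Proof.
move=> PP c0; apply/eqP; rewrite eq_le measure_ge0 andbT -c0; exact: capP.
Qed.

Lemma nullU (P : probability (Omega R d) R) A B : measurable A -> measurable B ->
  P A = 0%E -> P B = 0%E -> P (A `|` B) = 0%E.
Proof.
move=> mA mB PA PB; apply/eqP; rewrite eq_le measure_ge0 andbT.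
have PA' : (P A <= 0)%E by rewrite PA.
have PB' : (P B <= 0)%E by rewrite PB.
apply: le_trans (measureU2 P mA mB) _; rewrite -(adde0 0%E); exact: leeD PA' PB'.
Qed.

Lemma null_sub (P : probability (Omega R d) R) A B : measurable A -> measurable B ->
  A `<=` B -> P B = 0%E -> P A = 0%E.
Proof.
move=> mA mB AB PB; apply/eqP; rewrite eq_le measure_ge0 andbT -PB.
by apply: le_measure => //; rewrite inE.
Qed.

Lemma fin_or (x y : \bar R) : ~~ ((x \is a fin_num) && (y \is a fin_num)) ->
  (`|x| + `|y| = +oo)%E.
Proof. by case: x => [x||]; case: y => [y||]. Qed.

Lemma ae_fin (X : Omega R d -> \bar R) (P : probability (Omega R d) R) : Ps P ->
  measurable_fun setT X -> (Ehat Ps (fun w => `|X w|) < +oo)%E ->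
  exists N, [/\ measurable N, P N = 0%E & forall w, ~~ (X w \is a fin_num) -> N w].
Proof.
move=> PP mX iX.
have iXP : P.-integrable setT X.
  apply/integrableP; split => //; apply: le_lt_trans iX; exact: Ehat_ub.
have [N [mN PN sN]] := @integrable_ae _ _ _ P setT measurableT X iXP.
exists N; split => // w nf; apply: sN => /= H; move: nf; by rewrite H.
Qed.

Lemma L1Gstar_op (g : R -> R -> R)
  (Hg1 : forall a b c e, `|g a b - g c e| <= `|a - c| + `|b - e|)
  (Hg2 : forall a b, `|g a b| <= `|a| + `|b|)
  (Hgm : forall f1 f2 : Omega R d -> R, measurable_fun setT f1 -> measurable_fun setT f2 ->
     measurable_fun setT (fun w => g (f1 w) (f2 w)))
  (Hg3 : forall a b c e, a <= c -> b <= e -> g a b <= g c e)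
  (e0 : \bar R) (X Y : Omega R d -> \bar R) :
  L1Gstar Ps X -> L1Gstar Ps Y ->
  L1Gstar Ps (fun w => if (X w \is a fin_num) && (Y w \is a fin_num)
                       then (g (fine (X w)) (fine (Y w)))%:E else e0).
Proof.
move=> [[mX iX] [Xn [Xl [N1 [mN1 cN1 HN1]]]]] [[mY iY] [Yn [Yl [N2 [mN2 cN2 HN2]]]]].
set c := fun w => (X w \is a fin_num) && (Y w \is a fin_num).
have mc : measurable_fun setT c.
  apply: measurable_and; apply: (measurable_fun_bool true).
  - exact: emeasurable_fin_num.
  - exact: emeasurable_fin_num.
have mZ : measurable_fun setT (fun w => if c w then (g (fine (X w)) (fine (Y w)))%:E else e0).
  apply: measurable_fun_ifT => //; apply/measurable_EFinP; apply: Hgm.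
  - exact: measurableT_comp.
  - exact: measurableT_comp.
have maX : measurable_fun setT (fun w => `|X w|%E) by apply: measurableT_comp mX; exact: abse_measurable.
have maY : measurable_fun setT (fun w => `|Y w|%E) by apply: measurableT_comp mY; exact: abse_measurable.
split; first split.
- exact: mZ.
- apply: (@le_lt_trans _ _ (Ehat Ps (fun w => `|X w| + `|Y w|)%E)).
    apply: Ehat_le => //.
    + by move=> w; exact: abse_ge0.
    + exact: (measurableT_comp (@abse_measurable _ setT) mZ).
    + exact: emeasurable_funD.
    + move=> w; rewrite -/(c w); case: ifPn => [/andP[]|nc]; last by rewrite fin_or // leey.
      case: (X w) => [x||] // _; case: (Y w) => [y||] // _ /=.
      by rewrite -EFinD lee_fin.
  apply: (@le_lt_trans _ _ (Ehat Ps (fun w => `|X w|) + Ehat Ps (fun w => `|Y w|))%E).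
    exact: Ehat_add.
  exact: lte_add_pinfty.
exists (fun n w => g (Xn n w) (Yn n w)); split; first by move=> n; exact: L1G_op.
pose N3 := [set w | ~~ c w].
have mN3 : measurable N3.
  by have := measurable_neg mc measurableT (Y := [set true]) I; rewrite setTI.
exists (N1 `|` N2 `|` N3); split.
- by apply: measurableU => //; exact: measurableU.
- apply: cap0 => P PP.
  apply: nullU => //; first exact: measurableU.
    by apply: nullU => //; exact: capP0 PP _.
  have [NX [mNX PNX sNX]] := ae_fin PP mX iX.
  have [NY [mNY PNY sNY]] := ae_fin PP mY iY.
  apply: (@null_sub P _ (NX `|` NY)) => //; first exact: measurableU.
    move=> w; rewrite /N3 /c /= negb_and => /orP[/sNX|/sNY]; [left|right] => //.
  exact: nullU.
- move=> w Hw.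
  have n1 : ~ N1 w by move=> h; apply: Hw; left; left.
  have n2 : ~ N2 w by move=> h; apply: Hw; left; right.
  have cw : c w by apply/negPn/negP => h; apply: Hw; right.
  have [dX cX] := HN1 w n1; have [dY cY] := HN2 w n2.
  rewrite /= -/(c w) cw; move/andP: cw => [fx fy].
  split; first by move=> n; apply: Hg3.
  move: cX cY; rewrite -(fineK fx) -(fineK fy).
  move=> /fine_cvgP[_ cx] /fine_cvgP[_ cy].
  apply: cvg_EFin; first exact: nearW.
  exact: (cvg_op Hg1 cx cy).
Qed.
End S.

Lemma max_lip (R : realType) (a b c e : R) :
  `|Num.max a b - Num.max c e| <= `|a - c| + `|b - e|.
Proof.
have h1 := ler_norm (a - c); have h2 := ler_norm (c - a).
have h3 := ler_norm (b - e); have h4 := ler_norm (e - b).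
rewrite (distrC c a) in h2; rewrite (distrC e b) in h4.
rewrite ler_norml; case: (ltP a b) => hab; case: (ltP c e) => hce; apply/andP; split; lra.
Qed.

Lemma min_lip (R : realType) (a b c e : R) :
  `|Num.min a b - Num.min c e| <= `|a - c| + `|b - e|.
Proof.
have h1 := ler_norm (a - c); have h2 := ler_norm (c - a).
have h3 := ler_norm (b - e); have h4 := ler_norm (e - b).
rewrite (distrC c a) in h2; rewrite (distrC e b) in h4.
rewrite ler_norml; case: (ltP a b) => hab; case: (ltP c e) => hce; apply/andP; split; lra.
Qed.

Lemma max_bd (R : realType) (a b : R) : `|Num.max a b| <= `|a| + `|b|.
Proof.
have h1 := ler_norm a; have h2 := ler_norm (- a); rewrite normrN in h2.
have h3 := ler_norm b; have h4 := ler_norm (- b); rewrite normrN in h4.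
rewrite ler_norml; case: (ltP a b) => hab; apply/andP; split; lra.
Qed.

Lemma min_bd (R : realType) (a b : R) : `|Num.min a b| <= `|a| + `|b|.
Proof.
have h1 := ler_norm a; have h2 := ler_norm (- a); rewrite normrN in h2.
have h3 := ler_norm b; have h4 := ler_norm (- b); rewrite normrN in h4.
rewrite ler_norml; case: (ltP a b) => hab; apply/andP; split; lra.
Qed.

Lemma max_mono (R : realType) (a b c e : R) : a <= c -> b <= e -> Num.max a b <= Num.max c e.
Proof. by move=> h1 h2; case: (ltP a b) => hab; case: (ltP c e) => hce; lra. Qed.

Lemma min_mono (R : realType) (a b c e : R) : a <= c -> b <= e -> Num.min a b <= Num.min c e.
Proof. by move=> h1 h2; case: (ltP a b) => hab; case: (ltP c e) => hce; lra. Qed.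

Lemma maxmin_dist (R : realType) (x y : R) : `|x - y| = Num.max x y - Num.min x y.
Proof.
case: (ltP x y) => h.
  by rewrite ler0_norm ?opprB //; lra.
by rewrite ger0_norm //; lra.
Qed.

Lemma abs_sub_oo (R : realType) (x y : \bar R) : ~~ ((x \is a fin_num) && (y \is a fin_num)) ->
  (`|x - y| = +oo)%E.
Proof. by case: x => [x||]; case: y => [y||]. Qed.

Theorem proposition3p17 (R : realType) (d : nat)
  (Ps : set (probability (Omega R d) R))
  (Ps_ne : Ps !=set0) (Ps_wc : weakly_compact Ps)
  (xi : Omega R d -> \bar R) :
  LGstar1 Ps xi -> LGstar1 Ps (fun w => `|xi w|%E).
Proof.
move=> [X [Y [LX LY ->]]].
exists (fun w => if (X w \is a fin_num) && (Y w \is a fin_num)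
                 then (Num.max (fine (X w)) (fine (Y w)))%:E else +oo%E).
exists (fun w => if (X w \is a fin_num) && (Y w \is a fin_num)
                 then (Num.min (fine (X w)) (fine (Y w)))%:E else 0%E).
split.
- apply: L1Gstar_op => //.
  + exact: max_lip.
  + exact: max_bd.
  + by move=> f1 f2 m1 m2; exact: measurable_maxr.
  + exact: max_mono.
- apply: L1Gstar_op => //.
  + exact: min_lip.
  + exact: min_bd.
  + by move=> f1 f2 m1 m2; exact: measurable_minr.
  + exact: min_mono.
- apply: funext => w /=; case: ifPn => [|nc]; last by rewrite abs_sub_oo // sube0.
  case: (X w) => [x||] //; case: (Y w) => [y||] // _ /=.
  by rewrite -EFinB maxmin_dist.
Qed.
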